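(* Let $\phi:\Delta\to\mathbb R$ be continuous, and for each $n$ and each pair of partitions $\lambda,\mu\vdash n$ let $\phi^{(\lambda)}_n(\mu)\in\mathbb R$ be given, such that there is a sequence $\delta_n\to0$ (not depending on $\lambda,\mu$) with $|\phi^{(\lambda)}_n(\mu)-\phi(\mu/n)|\le\delta_n$ for all $n,\lambda,\mu$. Let $g(x)=\max_{y\in\Delta,\,y\trianglerighteq x}\phi(y)$. Then for any $y\in\mathbb R^\theta$, as $n\to\infty$, \[ \frac1n\log\Big(\sum_{\lambda\vdash n}e^{y\cdot\lambda}\sum_{\mu\vdash n,\ \mu\trianglerighteq\lambda}\exp\big(n\,\phi^{(\lambda)}_n(\mu)\big)\Big)\to\max_{x\in\Delta}\big(y\cdot x+g(x)\big). \]
   Context: Fix $\theta\in\{2,3,\dots\}$. A partition $\lambda\vdash n$ means a vector $(\lambda_1,\dots,\lambda_\theta)$ of nonnegative integers with $\lambda_1\ge\dots\ge\lambda_\theta$ and $\sum\lambda_i=n$. $\Delta=\{x\in[0,1]^\theta:x_1\ge\dots\ge x_\theta,\ \sum_i x_i=1\}$. For vectors $x,y$, $y\trianglerighteq x$ means $y_1+\dots+y_i\ge x_1+\dots+x_i$ for all $i$. $y\cdot x=\sum_i y_ix_i$. *)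

(* Defs.v *)
From HB Require Import structures.
From mathcomp Require Import all_boot all_order all_algebra.
From mathcomp Require Import all_classical all_reals all_analysis.
Set Implicit Arguments. Unset Strict Implicit. Unset Printing Implicit Defensive.
Import Order.TTheory GRing.Theory Num.Theory.
Import numFieldNormedType.Exports.
Local Open Scope ring_scope.
Local Open Scope classical_set_scope.

Definition is_partition (theta n : nat) (l : 'I_theta -> nat) : bool :=
  [forall i : 'I_theta, forall j : 'I_theta, (i <= j)%N ==> (l j <= l i)%N]
  && (\sum_(i < theta) l i == n)%N.

Definition Delta {R : realType} (theta : nat) : set 'rV[R]_theta :=
  [set x | (forall i, 0 <= x 0 i <= 1)
         /\ (forall i j : 'I_theta, (i <= j)%N -> x 0 j <= x 0 i)
         /\ \sum_(i < theta) x 0 i = 1].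

Definition dominates {R : realType} (theta : nat) (y x : 'rV[R]_theta) : Prop :=
  forall k : nat, \sum_(i < theta | (i < k)%N) x 0 i <= \sum_(i < theta | (i < k)%N) y 0 i.

Definition dotp {R : realType} (theta : nat) (y x : 'rV[R]_theta) : R :=
  \sum_(i < theta) y 0 i * x 0 i.

Definition natv {R : realType} (theta : nat) (l : 'I_theta -> nat) : 'rV[R]_theta :=
  \row_i (l i)%:R.
Definition scaledv {R : realType} (theta n : nat) (l : 'I_theta -> nat) : 'rV[R]_theta :=
  \row_i ((l i)%:R / n%:R).

(* g(x) = max_{y in Delta, y ⊵ x} phi(y), written as a supremum (the max is attained). *)
Definition gmax {R : realType} (theta : nat) (phi : 'rV[R]_theta -> R)
  (x : 'rV[R]_theta) : R :=
  sup [set phi z | z in [set z | Delta z /\ dominates z x]].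

(* max_{x in Delta} (y.x + g(x)), written as a supremum (the max is attained). *)
Definition limval {R : realType} (theta : nat) (phi : 'rV[R]_theta -> R)
  (y : 'rV[R]_theta) : R :=
  sup [set dotp y x + gmax phi x | x in (@Delta R theta)].

Definition Zsum {R : realType} (theta : nat)
  (phin : nat -> ('I_theta -> nat) -> ('I_theta -> nat) -> R)
  (y : 'rV[R]_theta) (n : nat) : R :=
  \sum_(l : {ffun 'I_theta -> 'I_n.+1} | is_partition n (fun i => nat_of_ord (l i)))
     expR (dotp y (natv (fun i => nat_of_ord (l i))))
     * \sum_(m : {ffun 'I_theta -> 'I_n.+1} |
               is_partition n (fun i => nat_of_ord (m i))
               && `[< dominates (natv (R:=R) (fun i => nat_of_ord (m i)))
                               (natv (fun i => nat_of_ord (l i))) >])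
         expR (n%:R * phin n (fun i => nat_of_ord (l i)) (fun i => nat_of_ord (m i))).

(* Main.v *)
Require Import Defs.
From HB Require Import structures.
From mathcomp Require Import all_boot all_order all_algebra.
From mathcomp Require Import all_classical all_reals all_analysis.
From mathcomp Require Import ring lra.
Import Order.TTheory GRing.Theory Num.Theory.
Import numFieldNormedType.Exports.
Local Open Scope ring_scope.
Local Open Scope classical_set_scope.


Lemma part_le (theta n : nat) (l : 'I_theta -> nat) i :
  is_partition n l -> (l i <= n)%N.
Proof.
case/andP=> _ /eqP <-. by rewrite (bigD1 i) //= leq_addr.
Qed.

Lemma Delta_scaled (R : realType) theta n (l : 'I_theta -> nat) :
  (0 < n)%N -> is_partition n l -> @Delta R theta (scaledv n l).
Proof.
move=> n0 lp; have n0' : (0 : R) < n%:R by rewrite ltr0n.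
have [/forallP Hs /eqP Hsum] := andP lp.
split; [|split].
- move=> i; rewrite mxE divr_ge0 //= ler_pdivrMr // mul1r ler_nat.
  exact: part_le.
- move=> i j ij; rewrite !mxE ler_pM2r ?invr_gt0 // ler_nat.
  by have /forallP/(_ j) := Hs i; rewrite ij.
- under eq_bigr do rewrite mxE.
  by rewrite -mulr_suml -natr_sum Hsum divff // gt_eqF.
Qed.

Lemma sum_row (R : realType) theta (P : pred 'I_theta) (F : 'I_theta -> R) :
  \sum_(i < theta | P i) (\row_j F j) 0 i = \sum_(i < theta | P i) F i.
Proof. by apply: eq_bigr => i _; rewrite mxE. Qed.

Lemma dom_scaled (R : realType) theta n (l m : 'I_theta -> nat) :
  (0 < n)%N -> dominates (natv (R:=R) m) (natv l) -> dominates (scaledv (R:=R) n m) (scaledv n l).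
Proof.
move=> n0 H k; have := H k; rewrite /natv /scaledv !sum_row.
rewrite -!mulr_suml => h; rewrite ler_pM2r // invr_gt0 ltr0n //.
Qed.

Lemma dot_natv (R : realType) theta n (y : 'rV[R]_theta) (l : 'I_theta -> nat) :
  (0 < n)%N -> dotp y (natv l) = n%:R * dotp y (scaledv n l).
Proof.
move=> n0; rewrite /dotp mulr_sumr; apply: eq_bigr => i _; rewrite !mxE.
have : n%:R != 0 :> R by rewrite pnatr_eq0 -lt0n.
by move=> nz; field.
Qed.

Lemma closed_ge0 (R : realType) theta (f : 'rV[R]_theta -> R) :
  continuous f -> closed [set x | 0 <= f x].
Proof.
move=> fc; have -> : [set x | 0 <= f x] = f @^-1` [set r | 0 <= r] by [].
by apply: preimage_closed; [move=> x _; exact: fc | exact: closed_ge].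
Qed.

Lemma closed_Delta (R : realType) theta : closed (@Delta R theta).
Proof.
pose f1 (i : 'I_theta) (x : 'rV[R]_theta) := x 0 i.
pose f2 (i : 'I_theta) (x : 'rV[R]_theta) := 1 - x 0 i.
pose f3 (p : 'I_theta * 'I_theta) (x : 'rV[R]_theta) := x 0 p.1 - x 0 p.2.
pose f4 (x : 'rV[R]_theta) := \sum_(i < theta) x 0 i.
have cf4 : continuous f4.
  apply: continuous_big; first exact: add_continuous.
  move=> i _; exact: coord_continuous.
have cf1 i : continuous (f1 i) by exact: coord_continuous.
have cf2 i : continuous (f2 i).
  have -> : f2 i = (fun=> 1) - f1 i by [].
  move=> x; apply: continuousB; [exact: cst_continuous|exact: cf1].
have cf3 p : continuous (f3 p).
  have -> : f3 p = f1 p.1 - f1 p.2 by [].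
  move=> x; apply: continuousB; exact: cf1.
have -> : @Delta R theta = (\bigcap_(i in setT) [set x | 0 <= f1 i x])
   `&` (\bigcap_(i in setT) [set x | 0 <= f2 i x])
   `&` (\bigcap_(p in [set p : 'I_theta * 'I_theta | (p.1 <= p.2)%N]) [set x | 0 <= f3 p x])
   `&` (f4 @^-1` [set 1]).
  apply/seteqP; split => x /=.
  - move=> [H1 [H2 H3]]; split; [split; [split|]|] .
    + by move=> i _; rewrite /f1; case/andP: (H1 i).
    + by move=> i _ /=; rewrite /f2 subr_ge0; case/andP: (H1 i).
    + by move=> [i j] /= ij; rewrite /f3 /= subr_ge0; exact: H2.
    + by rewrite /f4 H3.
  - move=> [[[H1 H2] H3] H4]; split; [|split].
    + by move=> i; rewrite (H1 i I) -subr_ge0 (H2 i I).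
    + by move=> i j ij; have := H3 (i, j) ij; rewrite /f3 /= subr_ge0.
    + exact: H4.
apply: closedI; last first.
  by apply: preimage_closed; [move=> x _; exact: cf4 | exact: closed_eq].
apply: closedI; [apply: closedI|]; apply: closed_bigI => i _; exact: closed_ge0.
Qed.

Lemma Delta_bounded (R : realType) theta : bounded_set (@Delta R theta).
Proof.
exists 1; split; first by rewrite num_real.
move=> M M1 x [H1 _]; rewrite /Num.norm /= mx_normrE.
apply: bigmax_le => [|[i j] _ /=]; first by rewrite (le_trans ler01) // ltW.
rewrite (ord1 i); have /andP[h0 h1] := H1 j.
by rewrite ger0_norm // (le_trans h1) // ltW.
Qed.

Lemma phi_cont_at (R : realType) theta (phi : 'rV[R]_theta -> R) z (e : R) :
  {within (@Delta R theta), continuous phi} -> Delta z -> 0 < e ->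
  exists2 d, 0 < d & forall w, Delta w -> (forall i, `|z 0 i - w 0 i| < d) ->
     `|phi z - phi w| < e.
Proof.
move=> pc Dz e0.
have /subspace_continuousP/(_ z Dz) := pc.
move/cvgrPdist_lt/(_ e e0). rewrite /within /=. move/nbhs_ballP => [d d0 Hd].
exists d => // w Dw Hw. apply: Hd => //; rewrite -ball_normE /= /Num.norm /= mx_normrE.
apply: bigmax_lt => // -[i j] _ /=; rewrite (ord1 i) !mxE; exact: Hw.
Qed.

Definition e1row (R : realType) theta : 'rV[R]_theta :=
  \row_i (if (i == 0 :> nat)%N then 1 else 0).

Lemma e1_Delta (R : realType) theta : (0 < theta)%N -> @Delta R theta (e1row R theta).
Proof.
move=> th0; split; [|split].
- by move=> i; rewrite mxE; case: ifP => _; rewrite lexx ler01.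
- move=> i j ij; rewrite !mxE; case: ifP => j0; case: ifP => i0 //.
  + by move/eqP: j0 ij => ->; rewrite leqn0 i0.
- rewrite (bigD1 (Ordinal th0)) //= big1 ?addr0; first by rewrite mxE.
  move=> i /negbTE; rewrite mxE; case: ifP => // /eqP i0.
  suff -> : i = Ordinal th0 by rewrite eqxx.
  by apply: val_inj.
Qed.

Lemma phi_bounded (R : realType) theta (phi : 'rV[R]_theta -> R) :
  (0 < theta)%N -> {within (@Delta R theta), continuous phi} ->
  exists M, forall z, Delta z -> phi z <= M.
Proof.
move=> th0 pc.
have [c _ Hc] := EVT_max_rV (ex_intro _ _ (@e1_Delta R theta th0))
   (bounded_closed_compact (@Delta_bounded R theta) (@closed_Delta R theta)) pc.
by exists (phi c) => z Dz; apply: Hc; rewrite inE.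
Qed.

Definition ynorm {R : realType} {theta} (y : 'rV[R]_theta) := \sum_(i < theta) `|y 0 i|.

Lemma ynorm_ge0 (R : realType) theta (y : 'rV[R]_theta) : 0 <= ynorm y.
Proof. by apply: sumr_ge0 => i _. Qed.

Lemma dot_diff (R : realType) theta (y a b : 'rV[R]_theta) d :
  (forall i, `|a 0 i - b 0 i| <= d) -> `|dotp y a - dotp y b| <= ynorm y * d.
Proof.
move=> H; rewrite /dotp -sumrB /ynorm mulr_suml.
apply: le_trans (ler_norm_sum _ _ _) _; apply: ler_sum => i _.
by rewrite -mulrBr normrM ler_wpM2l.
Qed.

Lemma dot_le (R : realType) theta (y x : 'rV[R]_theta) :
  Delta x -> dotp y x <= ynorm y.
Proof.
move=> [H1 _]; rewrite /dotp /ynorm; apply: ler_sum => i _.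
have /andP[h0 h1] := H1 i.
apply: le_trans (ler_norm _) _; rewrite normrM (ger0_norm h0).
by rewrite -[leRHS]mulr1 ler_wpM2l.
Qed.

Lemma dom_refl (R : realType) theta (x : 'rV[R]_theta) : dominates x x.
Proof. by move=> k. Qed.

Lemma gmax_ge (R : realType) theta (phi : 'rV[R]_theta -> R) M x z :
  (forall z, Delta z -> phi z <= M) -> Delta z -> dominates z x -> phi z <= gmax phi x.
Proof.
move=> HM Dz dzx; apply: ub_le_sup; last by exists z.
by exists M => _ [w [Dw _] <-]; exact: HM.
Qed.

Lemma gmax_le (R : realType) theta (phi : 'rV[R]_theta -> R) M x :
  (forall z, Delta z -> phi z <= M) -> Delta x -> gmax phi x <= M.
Proof.
move=> HM Dx; apply: ge_sup; first by exists (phi x), x; split => //; exact: dom_refl.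
by move=> _ [w [Dw _] <-]; exact: HM.
Qed.

Lemma limval_ge (R : realType) theta (phi : 'rV[R]_theta -> R) M y x :
  (forall z, Delta z -> phi z <= M) -> Delta x -> dotp y x + gmax phi x <= limval phi y.
Proof.
move=> HM Dx; apply: ub_le_sup; last by exists x.
exists (ynorm y + M) => _ [w Dw <-]; apply: lerD; [exact: dot_le|exact: gmax_le HM Dw].
Qed.

Lemma limval_gt (R : realType) theta (phi : 'rV[R]_theta -> R) y v :
  (0 < theta)%N -> v < limval phi y ->
  exists x z, [/\ Delta x, Delta z, dominates z x & v < dotp y x + phi z].
Proof.
move=> th0 /sup_gt []; first by exists (dotp y (e1row R theta) + gmax phi (e1row R theta)),
  (e1row R theta); first exact: e1_Delta.
move=> _ [x Dx <-]; rewrite -ltrBlDl => /sup_gt [].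
  by exists (phi x), x; split => //; exact: dom_refl.
move=> _ [z [Dz dzx] <-] h; exists x, z; split => //; by rewrite -ltrBlDl.
Qed.

Set Implicit Arguments. Unset Strict Implicit.

Lemma sum_delta0 (V : nmodType) theta k (c : V) : (0 < theta)%N ->
  \sum_(i < theta | (i < k)%N) (if (i == 0 :> nat) then c else 0) = if (0 < k)%N then c else 0.
Proof.
move=> th0; case: (posnP k) => [->|k0].
  by rewrite big1 // => i; rewrite ltn0.
rewrite (bigD1 (Ordinal th0)) //= big1 ?addr0 // => i /andP[_ /negbTE].
case: ifP => // /eqP i0; suff -> : i = Ordinal th0 by rewrite eqxx.
by apply: val_inj.
Qed.

Lemma sum_delta0' (V : nmodType) theta (c : V) : (0 < theta)%N ->
  \sum_(i < theta) (if (i == 0 :> nat) then c else 0) = c.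
Proof.
move=> th0; have := @sum_delta0 V theta theta c th0; rewrite th0 => h; rewrite -[RHS]h.
by apply: eq_bigl => i; rewrite ltn_ord.
Qed.

Definition trw {R : realType} {theta} (w : 'rV[R]_theta) (n : nat) (i : 'I_theta) : nat :=
  Num.truncn (n%:R * w 0 i).

Definition rnd {R : realType} {theta} (w : 'rV[R]_theta) (n : nat) (i : 'I_theta) : nat :=
  (trw w n i + (if (i == 0 :> nat) then (n - \sum_j trw w n j)%N else 0%N))%N.

Lemma trw_bounds (R : realType) theta (w : 'rV[R]_theta) n i :
  Delta w -> (trw w n i)%:R <= n%:R * w 0 i < (trw w n i)%:R + 1.
Proof.
move=> [H1 _]; have /andP[h0 _] := H1 i.
have := @truncn_itv _ (n%:R * w 0 i) (mulr_ge0 (ler0n _ _) h0).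
by rewrite /trw -natr1.
Qed.

Lemma sum_trw (R : realType) theta (w : 'rV[R]_theta) n :
  Delta w -> (\sum_j trw w n j <= n)%N.
Proof.
move=> Dw; rewrite -(ler_nat R) natr_sum.
have [_ [_ H3]] := Dw.
apply: (@le_trans _ _ (n%:R * \sum_i w 0 i)); last by rewrite H3 mulr1.
rewrite mulr_sumr; apply: ler_sum => i _.
by case/andP: (trw_bounds n i Dw).
Qed.

Lemma rndR (R : realType) theta (w : 'rV[R]_theta) n i :
  Delta w -> ((rnd w n i)%:R : R) =
   (trw w n i)%:R + (if (i == 0 :> nat) then n%:R - \sum_j (trw w n j)%:R else 0).
Proof.
move=> Dw; rewrite /rnd natrD; case: ifP => _ //.
by rewrite natrB ?sum_trw // natr_sum.
Qed.

Lemma rnd_part (R : realType) theta (w : 'rV[R]_theta) n :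
  (0 < theta)%N -> Delta w -> is_partition n (rnd w n).
Proof.
move=> th0 Dw; apply/andP; split.
  apply/forallP => i; apply/forallP => j; apply/implyP => ij.
  have trle : (trw w n j <= trw w n i)%N.
    apply: le_truncn; rewrite ler_wpM2l //; have [_ [H2 _]] := Dw; exact: H2.
  rewrite /rnd; case: ifP => j0.
    by move/eqP: j0 ij => ->; rewrite leqn0 => ->; rewrite leq_add2r.
  by rewrite addn0 (leq_trans trle) // leq_addr.
rewrite /rnd big_split /= (@sum_delta0' nat) // subnKC //; exact: sum_trw.
Qed.

Lemma rnd_partial (R : realType) theta (w : 'rV[R]_theta) n k :
  (0 < theta)%N -> Delta w ->
  n%:R * (\sum_(i < theta | (i < k)%N) w 0 i) <= \sum_(i < theta | (i < k)%N) ((rnd w n i)%:R : R)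
  <= n%:R * (\sum_(i < theta | (i < k)%N) w 0 i) + theta%:R.
Proof.
move=> th0 Dw.
have -> : \sum_(i < theta | (i < k)%N) ((rnd w n i)%:R : R) = \sum_(i < theta | (i < k)%N)
   ((trw w n i)%:R + (if (i == 0 :> nat) then n%:R - \sum_j (trw w n j)%:R else 0)).
  by apply: eq_bigr => i _; rewrite rndR.
rewrite big_split /= sum_delta0 //.
have [_ [_ H3]] := Dw.
have tb i := trw_bounds n i Dw.
have Hall : \sum_j ((trw w n j)%:R : R) = \sum_(j < theta | (j < k)%N) (trw w n j)%:R
     + \sum_(j < theta | ~~ (j < k)%N) (trw w n j)%:R by rewrite (bigID (fun j : 'I_theta => (j < k)%N)).
have Hw : \sum_(i < theta) w 0 i = \sum_(j < theta | (j < k)%N) w 0 j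
     + \sum_(j < theta | ~~ (j < k)%N) w 0 j by rewrite (bigID (fun j : 'I_theta => (j < k)%N)).
have L1 : \sum_(j < theta | (j < k)%N) ((trw w n j)%:R : R) <= n%:R * \sum_(j < theta | (j < k)%N) w 0 j.
  by rewrite mulr_sumr; apply: ler_sum => i _; case/andP: (tb i).
have L2 : \sum_(j < theta | ~~ (j < k)%N) ((trw w n j)%:R : R) <= n%:R * \sum_(j < theta | ~~(j < k)%N) w 0 j.
  by rewrite mulr_sumr; apply: ler_sum => i _; case/andP: (tb i).
have L3 : n%:R * (\sum_(j < theta) w 0 j) - \sum_j ((trw w n j)%:R : R) <= theta%:R.
  rewrite mulr_sumr -sumrB; apply: (@le_trans _ _ (\sum_(i < theta) (1:R))); last first.
    by rewrite sumr_const card_ord.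
  apply: ler_sum => i _; case/andP: (tb i) => _ h; rewrite lerBlDl; exact: ltW.
have L4 : 0 <= \sum_(j < theta | ~~ (j < k)%N) ((trw w n j)%:R : R) by apply: sumr_ge0.
case: (posnP k) => [k0|k0].
  subst k; rewrite !big1 ?mulr0 ?add0r ?lexx ?ler0n // => i; rewrite ltn0.
rewrite H3 mulr1 in L3.
have Hn : n%:R * (\sum_(j < theta | (j < k)%N) w 0 j) + n%:R * (\sum_(j < theta | ~~(j < k)%N) w 0 j) = n%:R.
  by rewrite -mulrDr -Hw H3 mulr1.
rewrite Hall; apply/andP; split; lra.
Qed.

Lemma c_bounds (R : realType) theta (w : 'rV[R]_theta) n :
  Delta w -> 0 <= n%:R - \sum_j ((trw w n j)%:R : R) <= theta%:R.
Proof.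
move=> Dw; have [_ [_ H3]] := Dw; apply/andP; split.
  by rewrite subr_ge0 -natr_sum ler_nat sum_trw.
apply: (@le_trans _ _ (\sum_(i < theta) (1:R))); last by rewrite sumr_const card_ord.
have -> : n%:R = n%:R * \sum_(i < theta) w 0 i :> R by rewrite H3 mulr1.
rewrite mulr_sumr -sumrB; apply: ler_sum => i _.
case/andP: (trw_bounds n i Dw) => _ h; rewrite lerBlDl; exact: ltW.
Qed.

Lemma rnd_coord (R : realType) theta (w : 'rV[R]_theta) n i :
  (0 < theta)%N -> Delta w -> `|((rnd w n i)%:R : R) - n%:R * w 0 i| <= theta%:R.
Proof.
move=> th0 Dw; rewrite rndR //.
have /andP[c0 c1] := c_bounds n Dw.
have /andP[t0 t1] := trw_bounds n i Dw.
have th1 : (1 : R) <= theta%:R by rewrite ler1n.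
rewrite ler_norml; case: ifP => _; apply/andP; split; lra.
Qed.


Definition xp {R : realType} {theta} (x : 'rV[R]_theta) (eps : R) : 'rV[R]_theta :=
  \row_i ((1 - eps) * x 0 i + eps / theta%:R).
Definition zp {R : realType} {theta} (z : 'rV[R]_theta) (eps : R) : 'rV[R]_theta :=
  \row_i ((1 - eps) * z 0 i + (if (i == 0 :> nat) then eps else 0)).

Lemma sum_const_lt (R : realType) theta k (c : R) : (k <= theta)%N ->
  \sum_(i < theta | (i < k)%N) c = c * k%:R.
Proof.
move=> kt; rewrite -(big_ord_widen theta (fun=> c) kt) sumr_const card_ord.
by rewrite mulr_natr.
Qed.

Lemma xp_Delta (R : realType) theta (x : 'rV[R]_theta) eps :
  (0 < theta)%N -> 0 <= eps <= 1 -> Delta x -> Delta (xp x eps).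
Proof.
move=> th0 /andP[e0 e1] [H1 [H2 H3]].
have thp : (0 : R) < theta%:R by rewrite ltr0n.
have q0 : 0 <= eps / theta%:R by rewrite divr_ge0 // ltW.
have q1 : eps / theta%:R <= eps.
  by rewrite ler_pdivrMr // ler_peMr // ler1n.
split; [|split].
- move=> i; rewrite mxE; have /andP[a0 a1] := H1 i.
  have h0 : 0 <= (1 - eps) * x 0 i by rewrite mulr_ge0 // subr_ge0.
  have h1 : (1 - eps) * x 0 i <= 1 - eps by rewrite ler_piMr // subr_ge0.
  apply/andP; split; lra.
- move=> i j ij; rewrite !mxE lerD2r ler_wpM2l ?subr_ge0 //; exact: H2.
- under eq_bigr do rewrite mxE.
  rewrite big_split /= -mulr_sumr H3 sumr_const card_ord.
  have -> : eps / theta%:R *+ theta = eps by rewrite -[_ *+ theta]mulr_natr mulfVK // pnatr_eq0 -lt0n.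
  lra.
Qed.

Lemma zp_Delta (R : realType) theta (z : 'rV[R]_theta) eps :
  (0 < theta)%N -> 0 <= eps <= 1 -> Delta z -> Delta (zp z eps).
Proof.
move=> th0 /andP[e0 e1] [H1 [H2 H3]].
split; [|split].
- move=> i; rewrite mxE; have /andP[a0 a1] := H1 i.
  have h0 : 0 <= (1 - eps) * z 0 i by rewrite mulr_ge0 // subr_ge0.
  have h1 : (1 - eps) * z 0 i <= 1 - eps by rewrite ler_piMr // subr_ge0.
  case: ifP => _; apply/andP; split; lra.
- move=> i j ij; rewrite !mxE.
  have : (1 - eps) * z 0 j <= (1 - eps) * z 0 i by rewrite ler_wpM2l ?subr_ge0 //; exact: H2.
  case: ifP => j0; case: ifP => i0; try lra.
  by move/eqP: j0 ij => ->; rewrite leqn0 i0.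
- under eq_bigr do rewrite mxE.
  rewrite big_split /= -mulr_sumr H3 (@sum_delta0' R^o) //; lra.
Qed.

Lemma margin (R : realType) theta (x z : 'rV[R]_theta) eps k :
  (0 < k)%N -> (k < theta)%N -> 0 <= eps <= 1 ->
  \sum_(i < theta | (i < k)%N) x 0 i <= \sum_(i < theta | (i < k)%N) z 0 i ->
  \sum_(i < theta | (i < k)%N) (xp x eps) 0 i + eps / theta%:R <=
  \sum_(i < theta | (i < k)%N) (zp z eps) 0 i.
Proof.
move=> k0 kt /andP[e0 e1] dzx.
have th0 : (0 < theta)%N by apply: leq_ltn_trans kt.
have thp : (0 : R) < theta%:R by rewrite ltr0n.
rewrite /xp /zp !sum_row.
rewrite !big_split /= -!mulr_sumr sum_const_lt ?(ltnW kt) // sum_delta0 // k0.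
have : eps / theta%:R * k%:R + eps / theta%:R <= eps.
  have q0 : 0 <= eps / theta%:R by rewrite divr_ge0 // ltW.
  have E : eps / theta%:R * theta%:R = eps by rewrite mulfVK // gt_eqF.
  have : eps / theta%:R * (k.+1)%:R <= eps / theta%:R * theta%:R by rewrite ler_wpM2l // ler_nat.
  rewrite -natr1 mulrDr mulr1; lra.
have : (1 - eps) * \sum_(i < theta | (i < k)%N) x 0 i <= (1 - eps) * \sum_(i < theta | (i < k)%N) z 0 i.
  by rewrite ler_wpM2l ?subr_ge0.
lra.
Qed.

Lemma sum_rnd_full (R : realType) theta (w : 'rV[R]_theta) n k :
  (0 < theta)%N -> Delta w -> (theta <= k)%N ->
  \sum_(i < theta | (i < k)%N) ((rnd w n i)%:R : R) = n%:R.
Proof.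
move=> th0 Dw tk; have /andP[_ /eqP hs] := rnd_part n th0 Dw.
transitivity ((\sum_i rnd w n i)%:R : R); last by rewrite hs.
rewrite natr_sum; apply: eq_bigl => i; exact: leq_trans (ltn_ord i) tk.
Qed.

Lemma rnd_dom (R : realType) theta (x z : 'rV[R]_theta) (eps : R) n :
  (0 < theta)%N -> Delta x -> Delta z -> dominates z x -> 0 < eps <= 1 ->
  theta%:R * theta%:R <= n%:R * eps ->
  dominates (natv (R:=R) (rnd (zp z eps) n)) (natv (rnd (xp x eps) n)).
Proof.
move=> th0 Dx Dz dzx /andP[e0 e1] big k; rewrite /natv !sum_row.
have e01 : 0 <= eps <= 1 by rewrite e1 ltW.
have Dx' := xp_Delta th0 e01 Dx; have Dz' := zp_Delta th0 e01 Dz.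
case: (posnP k) => [->|k0]; first by rewrite !big1.
case: (ltnP k theta) => kt; last by rewrite !sum_rnd_full.
have /andP[_ A] := rnd_partial n k th0 Dx'.
have /andP[B _] := rnd_partial n k th0 Dz'.
have M := margin k0 kt e01 (dzx k).
have := ler_wpM2l (ler0n R n) M; rewrite mulrDr => M'.
have thp : (0 : R) < theta%:R by rewrite ltr0n.
have : theta%:R <= n%:R * (eps / theta%:R).
  by rewrite mulrA ler_pdivlMr.
lra.
Qed.

Lemma ln_small (R : realType) (c : R) : 0 < c ->
  exists N, forall n, (N <= n)%N -> ln ((n.+1)%:R : R) < c * n%:R.
Proof.
move=> c0; exists (Num.truncn (2 / (c * c))).+1 => n Nn.
have cc0 : 0 < c * c by rewrite mulr_gt0.
have hn : 2 / (c * c) < n%:R.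
  apply: lt_le_trans (real_truncnS_gt _) _; first by rewrite num_real.
  by rewrite ler_nat.
have hn2 : 2 < c * c * n%:R by rewrite mulrC -ltr_pdivrMr.
have n1 : (1 : R) <= n%:R.
  by rewrite ler1n; apply: leq_trans Nn.
have cn0 : 0 <= c * n%:R by rewrite mulr_ge0 // ltW.
have := expR_ge1Dxn 1 cn0; rewrite expr2 /= => E.
have E2 : n.+1%:R < expR (c * n%:R).
  apply: lt_le_trans E; rewrite -natr1 addrC ltrD2l.
  have -> : (c * n%:R * (c * n%:R)) / 2%:R = (c * c * n%:R) * n%:R / 2 by ring.
  rewrite ltr_pdivlMr //; nra.
by rewrite -[X in _ < X]expRK ltr_ln ?posrE ?ltr0Sn ?expR_gt0.
Qed.

Lemma Zsum_le (R : realType) theta (phin : nat -> ('I_theta -> nat) -> ('I_theta -> nat) -> R)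
  (y : 'rV[R]_theta) n (B : R) :
  (forall l m : 'I_theta -> nat, is_partition n l -> is_partition n m ->
     dominates (natv (R:=R) m) (natv l) -> dotp y (natv l) + n%:R * phin n l m <= B) ->
  Zsum phin y n <= (((n.+1 ^ theta) ^ 2)%N)%:R * expR B.
Proof.
move=> H; rewrite /Zsum.
have HK : #|{ffun 'I_theta -> 'I_n.+1}| = (n.+1 ^ theta)%N by rewrite card_ffun !card_ord.
have eB := expR_ge0 B.
apply: (@le_trans _ _ (\sum_(l : {ffun 'I_theta -> 'I_n.+1}) ((n.+1 ^ theta)%N%:R * expR B))).
  rewrite big_mkcond /=; apply: ler_sum => l _; case: ifP => Pl; last first.
    by rewrite mulr_ge0.
  rewrite mulr_sumr.
  apply: (@le_trans _ _ (\sum_(m : {ffun 'I_theta -> 'I_n.+1}) expR B)); last first.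
    by rewrite sumr_const HK mulr_natl.
  rewrite big_mkcond /=; apply: ler_sum => m _; case: ifP => [/andP[Pm /asboolP dom]|_] //.
  by rewrite -expRD ler_expR; apply: H.
by rewrite sumr_const HK -mulrnAl -mulr_natr -natrM expnS expn1.
Qed.

Lemma Zsum_ge (R : realType) theta (phin : nat -> ('I_theta -> nat) -> ('I_theta -> nat) -> R)
  (y : 'rV[R]_theta) n (l m : {ffun 'I_theta -> 'I_n.+1}) :
  is_partition n (fun i => nat_of_ord (l i)) -> is_partition n (fun i => nat_of_ord (m i)) ->
  dominates (natv (R:=R) (fun i => nat_of_ord (m i))) (natv (fun i => nat_of_ord (l i))) ->
  expR (dotp y (natv (fun i => nat_of_ord (l i))) +
        n%:R * phin n (fun i => nat_of_ord (l i)) (fun i => nat_of_ord (m i)))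
  <= Zsum phin y n.
Proof.
move=> Pl Pm dom; rewrite /Zsum (bigD1 l) //=; apply: ler_wpDr.
  apply: sumr_ge0 => l' _; apply: mulr_ge0; first exact: expR_ge0.
  by apply: sumr_ge0 => m' _; exact: expR_ge0.
rewrite expRD ler_wpM2l ?expR_ge0 // (bigD1 m) /=; last by rewrite Pm; apply/asboolP.
by apply: ler_wpDr => //; apply: sumr_ge0 => i _; exact: expR_ge0.
Qed.

Lemma scaled_close (R : realType) theta (w : 'rV[R]_theta) n i :
  (0 < theta)%N -> (0 < n)%N -> Delta w ->
  `|(scaledv (R:=R) n (rnd w n)) 0 i - w 0 i| <= theta%:R / n%:R.
Proof.
move=> th0 n0 Dw; have np : (0 : R) < n%:R by rewrite ltr0n.
rewrite mxE.
have -> : ((rnd w n i)%:R / n%:R - w 0 i) = ((rnd w n i)%:R - n%:R * w 0 i) / n%:R.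
  by field; rewrite gt_eqF.
rewrite normrM normfV (gtr0_norm np) ler_pM2r ?invr_gt0 //; exact: rnd_coord.
Qed.

Lemma xp_close (R : realType) theta (x : 'rV[R]_theta) eps i :
  (0 < theta)%N -> 0 <= eps -> Delta x -> `|(xp x eps) 0 i - x 0 i| <= eps.
Proof.
move=> th0 e0 [H1 _]; rewrite mxE.
have thp : (0 : R) < theta%:R by rewrite ltr0n.
have /andP[a0 a1] := H1 i.
have q0 : 0 <= theta%:R^-1 :> R by rewrite invr_ge0 ltW.
have q1 : theta%:R^-1 <= 1 :> R by rewrite invf_le1 // ler1n.
have -> : (1 - eps) * x 0 i + eps / theta%:R - x 0 i = eps * (theta%:R^-1 - x 0 i) by ring.
rewrite normrM ger0_norm // -[X in _ <= X]mulr1 ler_wpM2l // ler_norml; apply/andP; split; lra.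
Qed.

Lemma zp_close (R : realType) theta (z : 'rV[R]_theta) eps i :
  0 <= eps -> Delta z -> `|(zp z eps) 0 i - z 0 i| <= eps.
Proof.
move=> e0 [H1 _]; rewrite mxE.
have /andP[a0 a1] := H1 i.
have -> : (1 - eps) * z 0 i + (if (i == 0 :> nat) then eps else 0) - z 0 i
   = eps * ((if (i == 0 :> nat) then 1 else 0) - z 0 i) by case: ifP => _; ring.
rewrite normrM ger0_norm // -[X in _ <= X]mulr1 ler_wpM2l // ler_norml.
case: ifP => _; apply/andP; split; lra.
Qed.

Unset Implicit Arguments. Set Strict Implicit.

Lemma rnd_ffun (R : realType) theta (w : 'rV[R]_theta) n :
  (0 < theta)%N -> Delta w ->
  exists l : {ffun 'I_theta -> 'I_n.+1}, (fun i => nat_of_ord (l i)) = rnd w n.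
Proof.
move=> th0 Dw; exists [ffun i => inord (rnd w n i)]; apply: funext => i.
rewrite ffunE inordK // ltnS; apply: part_le; exact: rnd_part.
Qed.

Theorem lemma3p4 (R : realType) (theta : nat) (htheta : (2 <= theta)%N)
  (phi : 'rV[R]_theta -> R)
  (phicont : {within (@Delta R theta), continuous phi})
  (phin : nat -> ('I_theta -> nat) -> ('I_theta -> nat) -> R)
  (happrox : exists delta : nat -> R,
      delta @ \oo --> 0 /\
      forall (n : nat) (l m : 'I_theta -> nat),
        is_partition n l -> is_partition n m ->
        `|phin n l m - phi (scaledv n m)| <= delta n)
  (y : 'rV[R]_theta) :
  (fun n : nat => (n%:R)^-1 * ln (Zsum phin y n)) @ \oo --> limval phi y.
Proof.
have th0 : (0 < theta)%N by apply: leq_trans htheta.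
have [M HM] := @phi_bounded R theta phi th0 phicont.
have [delta [dcvg Hd]] := happrox.
set L := limval phi y.
set Y := ynorm y.
have Y0 : 0 <= Y := @ynorm_ge0 R theta y.
have thp : (0:R) < theta%:R by rewrite ltr0n.
have th1 : (1:R) <= theta%:R by rewrite ler1n.
apply/cvgrPdist_lt => e e0.
have e4 : L - e / 4 < L by rewrite ltrBlDr ltrDl divr_gt0.
have [x [z [Dx Dz dzx Hxz]]] := @limval_gt R theta phi y _ th0 e4.
have e8 : 0 < e / 8 by rewrite divr_gt0.
have [d d0 Hphi] := @phi_cont_at R theta phi z (e / 8) phicont Dz e8.
pose eps := Num.min 1 (Num.min (d / 2) (e / (16 * (Y + 1)))).
have eps0 : 0 < eps.
  by rewrite /eps !lt_min ltr01 !divr_gt0 //= mulr_gt0 // ltr_wpDl.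
have eps1 : eps <= 1 by rewrite /eps ge_min lexx.
have epsd : eps <= d / 2 by rewrite /eps !ge_min lexx orbT.
have epse : eps <= e / (16 * (Y + 1)) by rewrite /eps !ge_min lexx !orbT.
have e01 : 0 <= eps <= 1 by rewrite eps1 ltW.
have e01' : 0 < eps <= 1 by rewrite eps1 eps0.
have Yeps : Y * eps <= e / 16.
  apply: (@le_trans _ _ ((Y + 1) * eps)); first by rewrite ler_wpM2r ?ltW //; lra.
  rewrite mulrC -ler_pdivlMr ?ltr_wpDl //; apply: (le_trans epse).
  by rewrite invfM mulrA.
have Dx' := xp_Delta th0 e01 Dx.
have Dz' := zp_Delta th0 e01 Dz.
have /cvgrPdist_lt/(_ (e / 8) e8) [Nd _ HNd] := dcvg.
have e4t : 0 < e / (4 * theta%:R) by rewrite divr_gt0 // mulr_gt0.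
have [Nl HNl] := ln_small e4t.
pose N1 := (Num.truncn (theta%:R * theta%:R / eps)).+1.
exists (maxn 1 (maxn N1 (maxn Nd Nl))) => // n /=.
rewrite !geq_max => /andP[n1 /andP[nN1 /andP[nNd nNl]]].
have np : (0:R) < n%:R by rewrite ltr0n.
have bign : theta%:R * theta%:R < n%:R * eps.
  rewrite -ltr_pdivrMr //; apply: lt_le_trans (real_truncnS_gt _) _; first by rewrite num_real.
  by rewrite ler_nat.
have [lam El] := @rnd_ffun R theta _ n th0 Dx'.
have [mu Em] := @rnd_ffun R theta _ n th0 Dz'.
have Pl := rnd_part n th0 Dx'.
have Pm := rnd_part n th0 Dz'.
have dom := rnd_dom th0 Dx Dz dzx e01' (ltW bign).
have := @Zsum_ge R theta phin y n lam mu; rewrite El Em => /(_ Pl Pm dom) Zge.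
have Zpos : 0 < Zsum phin y n := lt_le_trans (expR_gt0 _) Zge.
have lnge : dotp y (natv (rnd (xp x eps) n)) + n%:R * phin n (rnd (xp x eps) n) (rnd (zp z eps) n)
    <= ln (Zsum phin y n).
  by rewrite -ler_expR lnK ?posrE.
have Zle : Zsum phin y n <= (((n.+1 ^ theta) ^ 2)%N)%:R * expR (n%:R * (L + delta n)).
  apply: Zsum_le => l m Pl0 Pm0 dom0.
  rewrite (@dot_natv R theta n y l n1) -mulrDr ler_wpM2l ?ler0n //.
  have := Hd n l m Pl0 Pm0; rewrite ler_norml => /andP[_ h1].
  have D1 := @Delta_scaled R theta n l n1 Pl0.
  have D2 := @Delta_scaled R theta n m n1 Pm0.
  have G1 := @gmax_ge R theta phi M (scaledv n l) (scaledv n m) HM D2 (@dom_scaled R theta n l m n1 dom0).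
  have G2 := @limval_ge R theta phi M y (scaledv n l) HM D1.
  rewrite -/L in G2; lra.
have lnle : ln (Zsum phin y n) <= (theta * 2)%:R * ln (n.+1)%:R + n%:R * (L + delta n).
  have K0 : (0 : R) < (((n.+1 ^ theta) ^ 2)%N)%:R by rewrite ltr0n expn_gt0 expn_gt0.
  rewrite -ler_expR lnK ?posrE // expRD expRM_natl lnK ?posrE ?ltr0Sn // -natrX expnM.
  exact: Zle.
set lnZ := ln (Zsum phin y n) in lnge lnle *.
pose sl : 'rV[R]_theta := scaledv n (rnd (xp x eps) n).
pose sm : 'rV[R]_theta := scaledv n (rnd (zp z eps) n).
have thn : theta%:R / n%:R < eps.
  rewrite ltr_pdivrMr // mulrC; apply: le_lt_trans bign.
  by rewrite ler_peMr // ltW.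
have hx i : `|sl 0 i - x 0 i| <= eps + eps.
  have h1 := scaled_close i th0 n1 Dx'.
  have h2 := xp_close i th0 (ltW eps0) Dx.
  have := ler_normD (sl 0 i - xp x eps 0 i) (xp x eps 0 i - x 0 i).
  rewrite addrA subrK => h; lra.
have hz i : `|z 0 i - sm 0 i| < d.
  have h1 := scaled_close i th0 n1 Dz'.
  have h2 := zp_close i (ltW eps0) Dz.
  have := ler_normD (sm 0 i - zp z eps 0 i) (zp z eps 0 i - z 0 i).
  rewrite addrA subrK distrC => h; lra.
have Hph := Hphi sm (@Delta_scaled R theta n _ n1 Pm) hz.
have Hdot := @dot_diff R theta y sl x _ hx.
have Hdn := HNd n nNd; rewrite /= sub0r normrN in Hdn.
have Hln := HNl n nNl.
have := Hd n _ _ Pl Pm; rewrite ler_norml => /andP[hlo _].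
rewrite -/sm in hlo.
rewrite (@dot_natv R theta n y _ n1) -/sl in lnge.
have /andP[dlo dhi] : - (e/8) < delta n < e/8 by rewrite -ltr_norml.
have up1 : (theta * 2)%:R * ln (n.+1)%:R < e / 2 * n%:R.
  have -> : e / 2 * n%:R = (theta * 2)%:R * (e / (4 * theta%:R) * n%:R).
    by rewrite natrM; field; rewrite gt_eqF.
  by rewrite ltr_pM2l // ltr0n muln_gt0 th0.
have up2 : n%:R * delta n <= n%:R * (e / 8) by rewrite ler_wpM2l // ltW.
have lo1 : n%:R * (L - e) < n%:R * (dotp y sl + phin n (rnd (xp x eps) n) (rnd (zp z eps) n)).
  rewrite ltr_pM2l //.
  move: Hph Hdot; rewrite !ltr_norml ler_norml => /andP[p1 p2] /andP[q1 q2].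
  have : Y * (eps + eps) <= e / 8 by lra.
  rewrite -/Y in q1 q2; lra.
have hup : lnZ < n%:R * (L + e).
  rewrite mulrDr in lnle *; lra.
have hlo2 : n%:R * (L - e) < lnZ by rewrite mulrDr in lo1; lra.
have E : lnZ = n%:R * (n%:R^-1 * lnZ) by rewrite mulrA divff ?mul1r // gt_eqF.
rewrite E ltr_pM2l // in hup; rewrite E ltr_pM2l // in hlo2.
rewrite ltr_norml.
apply/andP; split; lra.
Qed.
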